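(* Let $n\ge1$ and $\mathbb{P}\in\mathcal{P}_n$. Let \[ \mathcal{T}=\big\{T\in\mathbb{R}_{++}^{2\times n}:\ \mathbf{P}_{\mathbf{z}\sim\mathbb{P}}[z_j=T_{1j}/T_{2j}]=0\ \text{for all } j\in[n]\big\}. \] Then $R_n(\mathbb{P})=\sup_{T\in\mathcal{T}}R_n(\mathbb{P},T)$.
   Context: Scheduling on two machines with $n$ tasks. A processing-time matrix is $T=(T_{ij})\in\mathbb{R}_{++}^{2\times n}$. An allocation is $X\in\{0,1\}^{2\times n}$ with $X_{1j}+X_{2j}=1$; makespan $M(X,T)=\max_{i\in\{1,2\}}\sum_j X_{ij}T_{ij}$; $M^*(T)=\min_X M(X,T)$. $\mathcal{P}_n$ is the set of Borel probability measures on $\mathbb{R}^n$ supported in $\mathbb{R}_{++}^n$. For $\mathbb{P}\in\mathcal{P}_n$, algorithm $\mathcal{A}^{\mathbb{P}}$ draws $\mathbf{z}\sim\mathbb{P}$ and sends task $j$ to machine 1 iff $T_{1j}/T_{2j}<z_j$ (else to machine 2). $M(\mathbb{P},T)$ is the expected makespan of this allocation, $R_n(\mathbb{P},T)=M(\mathbb{P},T)/M^*(T)$, and $R_n(\mathbb{P})=\sup_{T\in\mathbb{R}_{++}^{2\times n}}R_n(\mathbb{P},T)\in[1,\infty]$. *)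

(* Defs.v *)
From HB Require Import structures.
From mathcomp Require Import all_boot all_order all_algebra.
From mathcomp Require Import all_classical all_reals all_analysis.
Set Implicit Arguments. Unset Strict Implicit. Unset Printing Implicit Defensive.
Import Order.TTheory GRing.Theory Num.Theory.
Local Open Scope classical_set_scope.
Local Open Scope ring_scope.

(* Machines are indexed by 'I_2 : machine 1 = ord0, machine 2 = (1 : 'I_2).
   An allocation X in {0,1}^{2 x n} with X_1j + X_2j = 1 is represented
   by the function sending each task j to the machine it is assigned to. *)
Definition allocation (n : nat) := {ffun 'I_n -> 'I_2}.

Definition pos_matrix (R : realType) (n : nat) (T : 'M[R]_(2, n)) : Prop :=
  forall i j, 0 < T i j.

Definition load (R : realType) (n : nat) (X : allocation n) (T : 'M[R]_(2, n))
  (i : 'I_2) : R := \sum_(j < n | X j == i) T i j.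

Definition makespan (R : realType) (n : nat) (X : allocation n)
  (T : 'M[R]_(2, n)) : R :=
  Num.max (load X T ord0) (load X T (1 : 'I_2)).

Definition opt_makespan (R : realType) (n : nat) (T : 'M[R]_(2, n)) : R :=
  \big[Num.min/makespan [ffun _ => ord0] T]_(X : allocation n) makespan X T.

Definition alg_alloc (R : realType) (n : nat) (z : n.-tuple R)
  (T : 'M[R]_(2, n)) : allocation n :=
  [ffun j => if T ord0 j / T 1 j < tnth z j then ord0 else (1 : 'I_2)].

(* P is a probability measure on R^n (Borel = product sigma-algebra on
   n.-tuple R) supported in R_{++}^n *)
Definition supported_pos (R : realType) (n : nat)
  (P : probability (n.-tuple R) R) : Prop :=
  P [set z | forall j, 0 < tnth z j] = 1%E.

Definition exp_makespan (R : realType) (n : nat)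
  (P : probability (n.-tuple R) R) (T : 'M[R]_(2, n)) : \bar R :=
  (\int[P]_z (makespan (alg_alloc z T) T)%:E)%E.

Definition sched_ratio (R : realType) (n : nat)
  (P : probability (n.-tuple R) R) (T : 'M[R]_(2, n)) : \bar R :=
  (exp_makespan P T * ((opt_makespan T)^-1)%:E)%E.

Definition ratio_sup (R : realType) (n : nat)
  (P : probability (n.-tuple R) R) : \bar R :=
  ereal_sup [set sched_ratio P T | T in [set T | pos_matrix T]].

Definition no_atom_at_ratio (R : realType) (n : nat)
  (P : probability (n.-tuple R) R) (T : 'M[R]_(2, n)) : Prop :=
  forall j : 'I_n, P [set z | tnth z j = T ord0 j / T 1 j] = 0%E.

(* Main.v *)
Require Import Defs.
From HB Require Import structures.
From mathcomp Require Import all_boot all_order all_algebra.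
From mathcomp Require Import all_classical all_reals all_analysis.
Import Order.TTheory GRing.Theory Num.Theory.
Local Open Scope classical_set_scope.
Local Open Scope ring_scope.
Set Implicit Arguments. Unset Strict Implicit.

Lemma alloc_meas (R : realType) (n : nat) (T : 'M[R]_(2, n)) (h : allocation n -> R) :
  measurable_fun [set: n.-tuple R] (fun z : n.-tuple R => h (alg_alloc z T)).
Proof.
move=> _ Y mY; rewrite setTI.
have -> : (fun z => h (alg_alloc z T)) @^-1` Y =
   \bigcup_(X in [set X | Y (h X)])
     \bigcap_(j in [set: 'I_n]) ((fun z : n.-tuple R => T ord0 j / T 1 j < tnth z j) @^-1`
          [set b : bool | (if b then ord0 else 1 : 'I_2) = X j]).
  apply/seteqP; split => z /=.
    move=> Yz; exists (alg_alloc z T) => //= j _ /=.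
    by rewrite /alg_alloc ffunE.
  move=> [X /= YX HX]; suff -> : alg_alloc z T = X by [].
  by apply/ffunP => j; rewrite ffunE; apply: (HX j).
apply: fin_bigcup_measurable; first exact: finite_finset.
move=> X _; apply: fin_bigcap_measurable; first exact: finite_finset.
move=> j _.
have mf : measurable_fun [set: n.-tuple R] (fun z : n.-tuple R => T ord0 j / T 1 j < tnth z j).
  apply: measurable_realfun.measurable_fun_ltr; first exact: measurable_cst.
  exact: measurable_tnth.
by rewrite -[X in measurable X]setTI; apply: mf.
Qed.
Definition Msum (R : realType) (n : nat) (T : 'M[R]_(2, n)) : R :=
  \sum_(j < n) (T ord0 j + T 1 j).

Definition Tsc (R : realType) (n : nat) (d : R) (T : 'M[R]_(2, n)) : 'M[R]_(2, n) :=
  \matrix_(i, j) (if i == ord0 then (1 + d) * T i j else T i j).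

Lemma load_ge0 (R : realType) (n : nat) (X : allocation n) (T : 'M[R]_(2, n)) i :
  pos_matrix T -> 0 <= load X T i.
Proof. by move=> hT; apply: sumr_ge0 => j _; apply: ltW. Qed.

Lemma makespan_ge0 (R : realType) (n : nat) (X : allocation n) (T : 'M[R]_(2, n)) :
  pos_matrix T -> 0 <= makespan X T.
Proof. by move=> hT; rewrite /makespan le_max load_ge0. Qed.

Lemma makespan_le (R : realType) (n : nat) (X : allocation n) (T : 'M[R]_(2, n)) :
  pos_matrix T -> makespan X T <= Msum T.
Proof.
move=> hT; rewrite /makespan ge_max; apply/andP; split.
  apply: (le_trans (y := \sum_(j < n) T ord0 j)).
    rewrite /load; rewrite [X in _ <= X](bigID (fun j => X j == ord0)) /= lerDl.
    by apply: sumr_ge0 => j _; apply: ltW.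
  by apply: ler_sum => j _; rewrite lerDl ltW.
apply: (le_trans (y := \sum_(j < n) T 1 j)).
  rewrite /load; rewrite [X in _ <= X](bigID (fun j => X j == 1)) /= lerDl.
  by apply: sumr_ge0 => j _; apply: ltW.
by apply: ler_sum => j _; rewrite lerDr ltW.
Qed.
Lemma ord2_cases (i : 'I_2) : i = ord0 \/ i = 1.
Proof. by case: i => [[|[|k]] hk]; [left|right|by []]; apply: val_inj. Qed.

Lemma load_le_makespan (R : realType) (n : nat) (X : allocation n) (T : 'M[R]_(2, n)) i :
  load X T i <= makespan X T.
Proof. by case: (ord2_cases i) => ->; rewrite /makespan le_max lexx ?orbT. Qed.

Lemma makespan_gt0 (R : realType) (n : nat) (X : allocation n) (T : 'M[R]_(2, n)) :
  (0 < n)%N -> pos_matrix T -> 0 < makespan X T.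
Proof.
move=> hn hT; pose j0 := Ordinal hn.
apply: (lt_le_trans _ (load_le_makespan X T (X j0))).
rewrite /load (bigD1 j0) //=; apply: ltr_pwDl; first exact: hT.
by apply: sumr_ge0 => j _; apply: ltW.
Qed.

Lemma opt_gt0 (R : realType) (n : nat) (T : 'M[R]_(2, n)) :
  (0 < n)%N -> pos_matrix T -> 0 < opt_makespan T.
Proof.
move=> hn hT; rewrite /opt_makespan.
apply: (big_ind (fun x => 0 < x)); first exact: makespan_gt0.
  by move=> x y hx hy; rewrite lt_min hx hy.
by move=> X _; exact: makespan_gt0.
Qed.

Lemma Tsc_pos (R : realType) (n : nat) (d : R) (T : 'M[R]_(2, n)) :
  0 <= d -> pos_matrix T -> pos_matrix (Tsc d T).
Proof.
move=> hd hT i j; rewrite mxE; case: ifP => _; last exact: hT.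
apply: mulr_gt0; last exact: hT.
by apply: ltr_pwDl.
Qed.

Lemma load_Tsc0 (R : realType) (n : nat) (d : R) (X : allocation n) (T : 'M[R]_(2, n)) :
  load X (Tsc d T) ord0 = (1 + d) * load X T ord0.
Proof. by rewrite /load mulr_sumr; apply: eq_bigr => j _; rewrite mxE. Qed.

Lemma load_Tsc1 (R : realType) (n : nat) (d : R) (X : allocation n) (T : 'M[R]_(2, n)) :
  load X (Tsc d T) 1 = load X T 1.
Proof. by rewrite /load; apply: eq_bigr => j _; rewrite mxE. Qed.

Lemma makespan_Tsc_ge (R : realType) (n : nat) (d : R) (X : allocation n) (T : 'M[R]_(2, n)) :
  0 <= d -> pos_matrix T -> makespan X T <= makespan X (Tsc d T).
Proof.
move=> hd hT; rewrite /makespan load_Tsc0 load_Tsc1 ge_max !le_max lexx !orbT andbT.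
by rewrite ler_peMl ?load_ge0 // lerDl.
Qed.

Lemma makespan_Tsc_le (R : realType) (n : nat) (d : R) (X : allocation n) (T : 'M[R]_(2, n)) :
  0 <= d -> pos_matrix T -> makespan X (Tsc d T) <= (1 + d) * makespan X T.
Proof.
move=> hd hT; rewrite /makespan load_Tsc0 load_Tsc1 ge_max.
have h1 : 0 <= 1 + d by apply: addr_ge0.
apply/andP; split; first by rewrite ler_wpM2l // le_max lexx.
apply: (le_trans (y := Num.max (load X T ord0) (load X T 1))); first by rewrite le_max lexx orbT.
by rewrite ler_peMl ?lerDl // le_max load_ge0.
Qed.

Lemma opt_Tsc_le (R : realType) (n : nat) (d : R) (T : 'M[R]_(2, n)) :
  0 <= d -> pos_matrix T -> opt_makespan (Tsc d T) <= (1 + d) * opt_makespan T.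
Proof.
move=> hd hT; rewrite /opt_makespan.
apply: (big_ind2 (fun a b => a <= (1 + d) * b)); first exact: makespan_Tsc_le.
  move=> a1 b1 a2 b2 h1 h2.
  by rewrite ge_min; case: (leP b1 b2) => hb; rewrite ?h1 ?h2 ?orbT.
by move=> X _; exact: makespan_Tsc_le.
Qed.
Definition fT (R : realType) (n : nat) (T : 'M[R]_(2, n)) (z : n.-tuple R) : R :=
  makespan (alg_alloc z T) T.

Definition Dset (R : realType) (n : nat) (d : R) (T : 'M[R]_(2, n)) : set (n.-tuple R) :=
  [set z | exists j, T ord0 j / T 1 j < tnth z j /\ tnth z j <= (1 + d) * (T ord0 j / T 1 j)].

Lemma fT_meas (R : realType) (n : nat) (T : 'M[R]_(2, n)) : measurable_fun setT (fT T).
Proof. exact: (alloc_meas T (fun X => makespan X T)). Qed.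

Lemma Dset_meas (R : realType) (n : nat) (d : R) (T : 'M[R]_(2, n)) : measurable (Dset d T).
Proof.
have -> : Dset d T = \bigcup_(j in [set: 'I_n]) ((fun z : n.-tuple R => tnth z j) @^-1`
          `](T ord0 j / T 1 j), ((1 + d) * (T ord0 j / T 1 j))]).
  apply/seteqP; split => z /=.
    by move=> [j [h1 h2]]; exists j => //=; rewrite in_itv /= h1 h2.
  by move=> [j _]; rewrite /= in_itv /= => /andP[h1 h2]; exists j.
apply: fin_bigcup_measurable; first exact: finite_finset.
move=> j _; rewrite -[X in measurable X]setTI; apply: measurable_tnth => //.

Qed.

Lemma Msum_ge0 (R : realType) (n : nat) (T : 'M[R]_(2, n)) : pos_matrix T -> 0 <= Msum T.
Proof. by move=> hT; apply: sumr_ge0 => j _; apply: addr_ge0; apply: ltW. Qed.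

Lemma exp_bounds (R : realType) (n : nat) (P : probability (n.-tuple R) R) (T : 'M[R]_(2, n)) :
  pos_matrix T -> (0 <= exp_makespan P T)%E /\ (exp_makespan P T <= (Msum T)%:E)%E.
Proof.
move=> hT; split.
  by apply: integral_ge0 => z _; rewrite lee_fin makespan_ge0.
apply: (@le_trans _ _ (\int[P]_z (cst (Msum T)%:E z))%E).
  apply: ge0_le_integral => //.
  - by move=> z _; rewrite lee_fin makespan_ge0.
  - by apply/measurable_realfun.measurable_EFinP; exact: fT_meas.
  - by move=> z _; rewrite lee_fin makespan_le.
rewrite integral_cst // -[X in (_ <= X)%E]mule1; apply: lee_wpmul2l.
  by rewrite lee_fin; exact: Msum_ge0.
exact: probability_le1.
Qed.
Lemma alloc_Tsc (R : realType) (n : nat) (d : R) (T : 'M[R]_(2, n)) z :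
  0 <= d -> pos_matrix T -> ~ Dset d T z -> alg_alloc z (Tsc d T) = alg_alloc z T.
Proof.
move=> hd hT hz; apply/ffunP => j; rewrite !ffunE !mxE /= -mulrA.
have c0 : 0 < T ord0 j / T 1 j by apply: divr_gt0.
set c := T ord0 j / T 1 j in c0 *.
case: (ltP c (tnth z j)) => h.
  case: ltP => // h'; exfalso; apply: hz; exists j; split => //.
have -> : ((1 + d) * c < tnth z j) = false.
  apply/negbTE; rewrite -leNgt; apply: (le_trans h).
  by apply: ler_peMl; [exact: ltW | rewrite lerDl].
by [].
Qed.

Lemma key_ineq (R : realType) (n : nat) (P : probability (n.-tuple R) R) (T : 'M[R]_(2, n)) (d : R) :
  0 <= d -> pos_matrix T ->
  (exp_makespan P T <= exp_makespan P (Tsc d T) + (Msum T)%:E * P (Dset d T))%E.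
Proof.
move=> hd hT; rewrite /exp_makespan.
have mD := Dset_meas d T.
have hT' := Tsc_pos hd hT.
apply: (@le_trans _ _ (\int[P]_z ((fT (Tsc d T) z + Msum T * \1_(Dset d T) z)%:E))%E).
  apply: ge0_le_integral => //.
  - by move=> z _; rewrite lee_fin makespan_ge0.
  - by apply/measurable_realfun.measurable_EFinP; exact: fT_meas.
  - apply/measurable_realfun.measurable_EFinP; apply: measurable_realfun.measurable_funD; first exact: fT_meas.
    apply: measurable_realfun.measurable_funM; first exact: measurable_cst.
    exact: measurable_realfun.measurable_indic.
  move=> z _; rewrite lee_fin /fT.
  case: (pselect (Dset d T z)) => hz.
    rewrite indicE mem_set // mulr1; apply: (le_trans (makespan_le _ hT)).
    by rewrite lerDr makespan_ge0.
  rewrite indicE memNset // mulr0 addr0 (alloc_Tsc hd hT hz).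
  exact: makespan_Tsc_ge.
under eq_integral do rewrite EFinD.
rewrite ge0_integralD //.
- apply: leeD2l.
  under eq_integral do rewrite EFinM.
  rewrite ge0_integralZl_EFin //.
  + rewrite integral_indic; [|exact: measurableT|exact: mD].
    by rewrite setIT.
  + by apply/measurable_realfun.measurable_EFinP; exact: measurable_realfun.measurable_indic.
  + exact: Msum_ge0.
- by move=> z _; rewrite lee_fin makespan_ge0.
- by apply/measurable_realfun.measurable_EFinP; exact: fT_meas.
- move=> z _; rewrite lee_fin; apply: mulr_ge0; first exact: Msum_ge0.
  by rewrite indicE; case: (_ \in _).
- apply/measurable_realfun.measurable_EFinP; apply: measurable_realfun.measurable_funM; first exact: measurable_cst.
  exact: measurable_realfun.measurable_indic.
Qed.
Lemma natSinv_lt (R : realType) (e : R) : 0 < e -> exists m : nat, m.+1%:R^-1 < e.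
Proof.
move=> he; have := near_infty_natSinv_lt (PosNum he).
case=> N _ hN; exists N; exact: (hN N (leqnn N)).
Qed.

Lemma Dset_mono (R : realType) (n : nat) (T : 'M[R]_(2, n)) (d d' : R) :
  pos_matrix T -> d <= d' -> Dset d T `<=` Dset d' T.
Proof.
move=> hT hdd z [j [h1 h2]]; exists j; split => //; apply: (le_trans h2).
by rewrite ler_wpM2r ?lerD2l // ltW // divr_gt0.
Qed.

Lemma Dset_cap (R : realType) (n : nat) (T : 'M[R]_(2, n)) :
  pos_matrix T -> \bigcap_m Dset (m.+1%:R^-1) T = set0.
Proof.
move=> hT; apply/seteqP; split => z //= hz.
have hm : forall j : 'I_n, exists m : nat,
    T ord0 j / T 1 j < tnth z j -> (1 + m.+1%:R^-1) * (T ord0 j / T 1 j) < tnth z j.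
  move=> j; case: (ltP (T ord0 j / T 1 j) (tnth z j)) => h; last by exists 0%N.
  have c0 : 0 < T ord0 j / T 1 j by apply: divr_gt0.
  have e0 : 0 < (tnth z j - T ord0 j / T 1 j) / (T ord0 j / T 1 j).
    by rewrite divr_gt0 // subr_gt0.
  have [m hm] := natSinv_lt e0.
  exists m => _.
  rewrite mulrDl mul1r -ltrBrDl.
  by rewrite -ltr_pdivlMr.
have [f hf] := choice hm.
pose M := (\max_(j < n) f j)%N.
have [j [h1 h2]] := hz M I.
have := hf j h1; rewrite ltNge => /negP; apply.
apply: (le_trans h2); apply: ler_wpM2r; first by apply: ltW; apply: divr_gt0; apply: hT.
rewrite lerD2l.
rewrite lef_pV2 ?posrE ?ltr0Sn // ler_nat ltnS.
exact: leq_bigmax.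
Qed.
Lemma prob_fin (R : realType) (n : nat) (P : probability (n.-tuple R) R) (A : set (n.-tuple R)) :
  measurable A -> P A \is a fin_num.
Proof.
move=> mA; rewrite ge0_fin_numE //; apply: (le_lt_trans (probability_le1 _ mA)).
exact: ltry.
Qed.

Lemma small_D (R : realType) (n : nat) (P : probability (n.-tuple R) R) (T : 'M[R]_(2, n)) (eta : R) :
  pos_matrix T -> 0 < eta ->
  exists2 d0 : R, 0 < d0 & forall d, 0 <= d -> d <= d0 -> (P (Dset d T) <= eta%:E)%E.
Proof.
move=> hT he.
pose F := fun m : nat => Dset (m.+1%:R^-1) T.
have hc := @nonincreasing_cvg_mu _ _ _ P F.
rewrite /F Dset_cap // measure0 in hc.
have {hc} := hc (le_lt_trans (probability_le1 _ (Dset_meas _ _)) (ltry 1)).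
move=> /(_ (fun i => Dset_meas _ _) measurable0) hc.
have {hc} : (P \o F) x @[x --> \oo] --> 0%E.
  apply: hc => a b hab; rewrite subsetEset; apply: Dset_mono => //.
  by rewrite lef_pV2 ?posrE ?ltr0Sn // ler_nat ltnS.
move=> /fine_cvgP [_ hc].
have := cvgr_dist_lt _ _ hc _ he.
case=> N _ hN.
exists N.+1%:R^-1; first by rewrite invr_gt0 ltr0Sn.
move=> d hd0 hd.
apply: (le_trans (le_measure _ _ _ (Dset_mono hT hd))); rewrite ?inE; try exact: Dset_meas.
have := hN N (leqnn N); rewrite /= sub0r normrN.
rewrite -(fineK (prob_fin P (Dset_meas (N.+1%:R^-1) T))) lee_fin => h.
apply: ltW; apply: le_lt_trans h; exact: ler_norm.
Qed.
From mathcomp Require Import finmap.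
Lemma sum_const_seq (R : realType) (I : Type) (s : seq I) (c : R) :
  \sum_(i <- s) c = c *+ size s.
Proof. by elim: s => [|x s IH]; rewrite ?big_nil // big_cons IH mulrS. Qed.

Lemma atoms_finite (R : realType) (n : nat) (P : probability (n.-tuple R) R)
  (A : R -> set (n.-tuple R)) :
  (forall d, measurable (A d)) -> (forall d d', d <> d' -> A d `&` A d' = set0) ->
  forall k : nat, finite_set [set d | ((k.+1%:R)^-1%:E <= P (A d))%E].
Proof.
move=> mA dA k; apply: contrapT => /(infinite_set_fset k.+2) [B hB hcard].
have tB : trivIset [set x : R | x \in B] A.
  move=> i j _ _ hij; apply: contrapT => hne; move: hij; rewrite (dA _ _ hne).
  by case=> x.
have hU := measure_fin_bigcup P (finite_fset B) tB (fun i _ => mA i).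
have le1 := probability_le1 P (fin_bigcup_measurable (finite_fset B) (fun i _ => mA i)).
rewrite hU fsbig_finite ?finite_fset // set_fsetK in le1.
have : (\sum_(x <- enum_fset B) (k.+1%:R^-1)%:E <= \sum_(x <- enum_fset B) P (A x))%E.
  rewrite big_seq [X in (_ <= X)%E]big_seq; apply: lee_sum => x hx.
  exact: hB.
move=> /le_trans /(_ le1); rewrite sumEFin sum_const_seq lee_fin.
apply/negP; rewrite -ltNge -[X in 1 < X]mulr_natl ltr_pdivlMr ?ltr0Sn // mul1r ltr_nat.
exact: hcard.
Qed.
Lemma good_delta (R : realType) (n : nat) (P : probability (n.-tuple R) R) (T : 'M[R]_(2, n)) (eps : R) :
  pos_matrix T -> 0 < eps ->
  exists d : R, [/\ 0 < d, d < eps &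
    forall j, P [set z | tnth z j = (1 + d) * (T ord0 j / T 1 j)] = 0%E].
Proof.
move=> hT he.
pose A (j : 'I_n) (d : R) := [set z : n.-tuple R | tnth z j = (1 + d) * (T ord0 j / T 1 j)].
have mA j d : measurable (A j d).
  have -> : A j d = (fun z : n.-tuple R => tnth z j) @^-1` [set (1 + d) * (T ord0 j / T 1 j)] by [].
  rewrite -[X in measurable X]setTI; apply: measurable_tnth => //.
have dA j d d' : d <> d' -> A j d `&` A j d' = set0.
  have c0 : T ord0 j / T 1 j != 0 by rewrite gt_eqF // divr_gt0.
  move=> hdd; apply/seteqP; split => z //= [h1 h2]; apply: hdd.
  by move: h1 h2; rewrite /A /= => -> /(mulIf c0) /addrI.
pose Bad := \bigcup_(j in [set: 'I_n]) \bigcup_(k in [set: nat])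
   [set d | ((k.+1%:R)^-1%:E <= P (A j d))%E].
have cB : countable Bad.
  apply: bigcup_countable; first by apply: finite_set_countable; exact: finite_finset.
  move=> j _; apply: bigcup_countable; first exact: card_lexx.
  move=> k _; apply: finite_set_countable; exact: (atoms_finite P (mA j) (@dA j) k).
apply: contrapT => hno.
have sub : [set` `]0, eps[] `<=` Bad.
  move=> d /=; rewrite in_itv /= => /andP[hd0 hd1].
  apply: contrapT => hnb; apply: hno; exists d; split => // j.
  apply: contrapT => hne; apply: hnb; exists j => //.
  have fin := prob_fin P (mA j d).
  have p0 : 0 < fine (P (A j d)).
    rewrite -lte_fin fineK // lt_neqAle measure_ge0 andbT eq_sym.
    by apply/negP => /eqP.
  have [k hk] := natSinv_lt p0.
  by exists k => //=; rewrite -(fineK fin) lee_fin ltW.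
have := countable_lebesgue_measure0 (sub_countable (subset_card_le sub) cB).
rewrite lebesgue_measure_itv /= lte_fin he oppr0 adde0 => /eqP.
by rewrite eqe gt_eqF.
Qed.
From mathcomp Require Import ring lra.

Theorem theorem2 (R : realType) (n : nat) (hn : (0 < n)%N)
  (P : probability (n.-tuple R) R) (hP : supported_pos P) :
  ratio_sup P =
  ereal_sup [set sched_ratio P T |
               T in [set T | pos_matrix T /\ no_atom_at_ratio P T]].
Proof.
apply/eqP; rewrite eq_le; apply/andP; split; last first.
  apply: le_ereal_sup => _ [T [hT _] <-]; by exists T.
apply: ge_ereal_sup => _ [T hT <-].
apply/lee_subgt0Pr => e he.
set opt := opt_makespan T.
have opt0 : 0 < opt by apply: opt_gt0.
set M := Msum T.
have M0 : 0 <= M by apply: Msum_ge0.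
have [E0 EM] := exp_bounds P hT.
have Efin : exp_makespan P T \is a fin_num.
  by rewrite ge0_fin_numE // (le_lt_trans EM) // ltry.
pose c := e * opt / (2 * (M + 1)).
have c0 : 0 < c by rewrite /c divr_gt0 ?mulr_gt0 // ltr_pwDr.
have [d0 d00 hd0] := small_D P hT c0.
have mpos : 0 < Num.min d0 c by rewrite lt_min d00 c0.
have [d [dpos dlt hatom]] := good_delta P hT mpos.
have dd0 : d <= d0 by apply: ltW; apply: (lt_le_trans dlt); rewrite ge_min lexx.
have dc : d <= c by apply: ltW; apply: (lt_le_trans dlt); rewrite ge_min lexx orbT.
have hT' := Tsc_pos (ltW dpos) hT.
have [E0' EM'] := exp_bounds P hT'.
have Efin' : exp_makespan P (Tsc d T) \is a fin_num.
  by rewrite ge0_fin_numE // (le_lt_trans EM') // ltry.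
have opt0' : 0 < opt_makespan (Tsc d T) by apply: opt_gt0.
have hopt := opt_Tsc_le (ltW dpos) hT.
have key := key_ineq P (ltW dpos) hT.
have hD := hd0 d (ltW dpos) dd0.
have Dfin := prob_fin P (Dset_meas d T).
apply: (@le_trans _ _ (sched_ratio P (Tsc d T))); last first.
  apply: le_ereal_sup_tmp; exists (sched_ratio P (Tsc d T)) => //.
  exists (Tsc d T) => //; split => // j.
  have -> : [set z | tnth z j = Tsc d T ord0 j / Tsc d T 1 j] =
            [set z | tnth z j = (1 + d) * (T ord0 j / T 1 j)].
    by rewrite !mxE /= -mulrA.
  exact: hatom.
move: key hD; rewrite /sched_ratio -(fineK Efin) -(fineK Efin') -(fineK Dfin).
rewrite -!EFinM -EFinB -EFinD !lee_fin.
set a := fine (exp_makespan P T).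
set a' := fine (exp_makespan P (Tsc d T)).
set p := fine (P (Dset d T)).
set opt' := opt_makespan (Tsc d T).
move=> key hp.
have a0 : 0 <= a by rewrite /a fine_ge0.
have aM : a <= M by rewrite /a -lee_fin fineK.
have a0' : 0 <= a' by rewrite /a' fine_ge0.
have d1 : 0 < 1 + d by rewrite ltr_pwDl // ltW.
have hpos : 0 < (1 + d) * opt by rewrite mulr_gt0.
have h1 : a' / ((1 + d) * opt) <= a' / opt'.
  by apply: ler_wpM2l => //; rewrite lef_pV2 ?posrE.
apply: le_trans h1.
rewrite ler_pdivlMr //.
have e1 : a / opt * ((1 + d) * opt) = a * (1 + d).
  by rewrite [(1 + d) * opt]mulrC mulrA divfK // gt_eqF.
rewrite mulrBl e1.
have h2 : 2 * M * c <= e * opt.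
  have M1 : M + 1 != 0 by rewrite gt_eqF // ltr_pwDr.
  have -> : 2 * M * c = e * opt * (M / (M + 1)) by rewrite /c; field.
  apply: ler_piMr; first by rewrite mulr_ge0 // ltW.
  by rewrite ler_pdivrMr ?ltr_pwDr // mul1r lerDl.
have h3 : a * d <= M * c.
  by apply: ler_pM => //; exact: ltW.
have h4 : M * p <= M * c by apply: ler_wpM2l.
have h5 : 0 <= e * d * opt by rewrite !mulr_ge0 // ltW.
rewrite -/M in key. clearbody c M opt. nra.
Qed.
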